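(* Let $1\le q\le k$, $n\ge 2$, $f\in P_1^{k,q}$, and for $i=1,\dots,n$ let $a_i,b_i\in E_k$ with $\gcd(a_i,k)=1$ and $g_i(x_i)=[a_if(x_i)+b_i]\bmod k$. Let $h(x_1,\dots,x_n)=[g_1(x_1)+\dots+g_n(x_n)]\bmod k$. Let $1<t\le n$ and distinct indices $j_1,\dots,j_t\in\{1,\dots,n\}$ satisfy $\gcd(a_{j_1}+a_{j_2}+\dots+a_{j_t},k)=1$. Then the function obtained from $h$ by identifying the variables $x_{j_1},\dots,x_{j_t}$ (i.e. substituting one common variable $z$ — either a new variable or one of $x_{j_1},\dots,x_{j_t}$ — for all of them), regarded as a function of $z$ and the remaining $n-t$ variables, belongs to $P_{n-t+1}^k$ and is an $H(q)$-function.
   Context: $E_k=\{0,1,\dots,k-1\}$, $k\ge 2$, with arithmetic modulo $k$. $P_m^k$ is the set of all functions $E_k^m\to E_k$; $P_1^{k,q}$ is the set of functions $E_k\to E_k$ taking exactly $q$ distinct values. For a variable $x$ of a function $g$, $\mathrm{Spr}(x,g)$ is the set of numbers of distinct values of all one-variable functions obtained from $g$ by fixing all variables other than $x$ to constants (for a function of the single variable $x$, this is $\{$number of its distinct values$\}$). A function $g$ is an $H(q)$-function if $\mathrm{Spr}(x,g)=\{q\}$ for every variable $x$ of $g$. *)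

(* Defs.v *)
From mathcomp Require Import all_boot.
Set Implicit Arguments. Unset Strict Implicit. Unset Printing Implicit Defensive.

(* E_k is represented by 'I_k; a function of P_m^k is a map
   {ffun 'I_m -> 'I_k} -> 'I_k (variables indexed by 'I_m). *)

Definition modk (k : nat) (hk : 0 < k) (n : nat) : 'I_k := Ordinal (ltn_pmod n hk).

Definition nvals (k : nat) (g : 'I_k -> 'I_k) : nat := #|[set g x | x : 'I_k]|.

Definition P1kq (k q : nat) (f : 'I_k -> 'I_k) : Prop := nvals f = q.

Definition upd (k m : nat) (c : {ffun 'I_m -> 'I_k}) (i : 'I_m) (x : 'I_k)
  : {ffun 'I_m -> 'I_k} := [ffun j => if j == i then x else c j].

Definition Spr (k m : nat) (g : {ffun 'I_m -> 'I_k} -> 'I_k) (i : 'I_m) (s : nat) : Prop :=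
  exists c : {ffun 'I_m -> 'I_k}, s = nvals (fun x => g (upd c i x)).

Definition H_fun (k m q : nat) (g : {ffun 'I_m -> 'I_k} -> 'I_k) : Prop :=
  forall (i : 'I_m) (s : nat), Spr g i s <-> s = q.

(* Main.v *)
Require Import Defs.
From mathcomp Require Import all_boot.

Lemma affine_inj (k A C : nat) (hk0 : 0 < k) (hA : coprime A k) :
  injective (fun v : 'I_k => modk hk0 (A * v + C)).
Proof.
move=> v1 v2 /(congr1 val) /= /eqP E.
rewrite eqn_modDr in E.
apply/val_inj/eqP => /=.
wlog le12 : v1 v2 E / v2 <= v1.
  move=> W; case: (leqP v2 v1) => H; first exact: W.
  by rewrite eq_sym; apply: W (ltnW H); rewrite eq_sym.
rewrite eqn_mod_dvd ?leq_mul // in E.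
rewrite -mulnBr Gauss_dvdr in E; last by rewrite coprime_sym.
have lt : v1 - v2 < k by apply: leq_ltn_trans (leq_subr _ _) _.
have := dvdn_leq; case: (posnP (v1 - v2)) => [/eqP|pos] D.
  by rewrite eqn_leq le12 -subn_eq0 D.
by have := D _ _ pos E; rewrite leqNgt lt.
Qed.

Lemma nvals_comp (k : nat) (phi f : 'I_k -> 'I_k) :
  injective phi -> nvals (fun x => phi (f x)) = nvals f.
Proof.
move=> inj; rewrite /nvals.
have -> : [set phi (f x) | x : 'I_k] = phi @: [set f x | x : 'I_k].
  by rewrite -imset_comp.
by rewrite card_imset.
Qed.

Theorem theorem2p3 (k q n : nat) (hk : 1 < k) (hq1 : 1 <= q) (hqk : q <= k)
  (hn : 2 <= n) (f : 'I_k -> 'I_k) (hf : P1kq q f)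
  (a b : 'I_n -> 'I_k) (ha : forall i, coprime (a i) k)
  (t : nat) (ht1 : 1 < t) (htn : t <= n) (j : 'I_t -> 'I_n) (hj : injective j)
  (hsum : coprime (\sum_(s < t) a (j s)) k)
  (sigma : 'I_n -> 'I_(n - t).+1)
  (hsig : forall i1 i2 : 'I_n, sigma i1 = sigma i2 <->
            (i1 = i2 \/ (i1 \in codom j /\ i2 \in codom j)))
  (hsurj : forall y : 'I_(n - t).+1, exists i, sigma i = y) :
  let hk0 : 0 < k := ltnW hk in
  let g (i : 'I_n) (x : 'I_k) : 'I_k := modk hk0 (a i * f x + b i) in
  let h (x : {ffun 'I_n -> 'I_k}) : 'I_k := modk hk0 (\sum_(i < n) g i (x i)) in
  H_fun q (fun y : {ffun 'I_(n - t).+1 -> 'I_k} => h [ffun i => y (sigma i)]).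
Proof.
move=> hk0 g h.
(* key: each variable gives an affine-injective image of f *)
have key : forall (i0 : 'I_(n - t).+1) (c : {ffun 'I_(n - t).+1 -> 'I_k}),
    nvals (fun x => h [ffun i => upd c i0 x (sigma i)]) = q.
  move=> i0 c.
  pose A := \sum_(i | sigma i == i0) a i.
  pose B := \sum_(i | sigma i == i0) b i.
  pose D := \sum_(i | sigma i != i0) ((a i * f (c (sigma i)) + b i) %% k).
  have hA : coprime A k.
    case: (boolP [exists s, sigma (j s) == i0]).
      case/existsP => s0 /eqP hs0.
      have -> : A = \sum_(i in [set j s | s : 'I_t]) a i.
        apply: eq_bigl => i; apply/eqP/idP.
          rewrite -hs0 => /hsig [->|[/codomP [s ->] _]];
            exact: imset_f.
        case/imsetP => s _ ->; rewrite -hs0; apply/hsig; right.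
        by split; apply: codom_f.
      by rewrite big_imset //= => x y _ _; apply: hj.
    move=> /existsPn hno.
    have [i hi] := hsurj i0.
    have ni : i \notin codom j.
      apply/negP => /codomP [s hs]; move: (hno s); by rewrite -hs hi eqxx.
    have -> : A = a i.
      rewrite /A (big_pred1 i) // => i'; apply/eqP/eqP.
        by rewrite -hi => /hsig [//|[_ H]]; rewrite H in ni.
      by move=> ->.
    exact: ha.
  have E : forall x, h [ffun i => upd c i0 x (sigma i)] =
                     modk hk0 (A * f x + (B + D)).
    move=> x; apply: val_inj => /=.
    rewrite (bigID (fun i => sigma i == i0)) /=.
    have -> : \sum_(i < n | sigma i == i0) g i ([ffun i1 => upd c i0 x (sigma i1)] i) =
              \sum_(i < n | sigma i == i0) ((a i * f x + b i) %% k).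
      by apply: eq_bigr => i /eqP hi; rewrite /g /= ffunE /upd ffunE hi eqxx.
    have -> : \sum_(i < n | sigma i != i0) g i ([ffun i1 => upd c i0 x (sigma i1)] i) = D.
      by apply: eq_bigr => i hi; rewrite /g /= ffunE /upd ffunE (negbTE hi).
    rewrite -modnDml modn_summ modnDml big_split /= -big_distrl /=.
    by rewrite addnA.
  have -> : nvals (fun x => h [ffun i => upd c i0 x (sigma i)]) =
            nvals (fun x => modk hk0 (A * f x + (B + D))).
    by rewrite /nvals (eq_imset _ E).
  rewrite (@nvals_comp k (fun v => modk hk0 (A * v + (B + D))) f (@affine_inj k A (B + D) hk0 hA)).
  exact: hf.
move=> i0 s; split.
  by case=> c ->; apply: key.
move=> ->; exists [ffun _ => Ordinal hk0].
by rewrite key.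
Qed.
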